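(* Let $(M,d)$ be a compact metric space, $\mu$ a probability measure on $M$, $k:M\times M\to[0,1]$ measurable, $M^s\subseteq M$ measurable, and $\rho>0$. For a bounded measurable $f:M\setminus M^s\to\mathbb{R}$ define $A_\mu f:M\setminus M^s\to\mathbb{R}$ by $$(A_\mu f)(x)=\frac{\int_{M\setminus M^s}k(x,y)f(y)\,d\mu(y)}{\rho+\int_M k(x,y)\,d\mu(y)}.$$ Then $\|A_\mu f\|_\infty\le\frac{1}{1+\rho}\|f\|_\infty$, where $\|g\|_\infty=\sup_{x\in M\setminus M^s}|g(x)|$. *)

(* Defs.v *)
From HB Require Import structures.
From mathcomp Require Import all_boot all_order all_algebra.
From mathcomp Require Import all_classical all_reals all_analysis.
Set Implicit Arguments. Unset Strict Implicit. Unset Printing Implicit Defensive.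
Import Order.TTheory GRing.Theory Num.Theory.
Local Open Scope classical_set_scope.
Local Open Scope ring_scope.

Notation borel M := (g_sigma_algebraType (@open M)).

Definition sup_norm {R : realType} {T : Type} (Ms : set T) (g : T -> R) : R :=
  sup [set `|g y| | y in ~` Ms].

Definition A_mu {R : realType} {d : measure_display} {T : measurableType d}
  (mu : {measure set T -> \bar R}) (k : T * T -> R) (Ms : set T) (rho : R)
  (f : T -> R) (x : T) : R :=
  Rintegral mu (~` Ms) (fun y => k (x, y) * f y) /
  (rho + Rintegral mu setT (fun y => k (x, y))).

(* Main.v *)
Require Import Defs.
From HB Require Import structures.
From mathcomp Require Import all_boot all_order all_algebra.
From mathcomp Require Import all_classical all_reals all_analysis.
From mathcomp Require Import ring lra measurable_realfun.
Import Order.TTheory GRing.Theory Num.Theory.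
Local Open Scope classical_set_scope.
Local Open Scope ring_scope.

Lemma bint (R : realType) d (T : measurableType d) (mu : probability T R)
  (D : set T) (g : T -> R) (C : R) : measurable D -> measurable_fun D g ->
  (forall y, D y -> `|g y| <= C) -> mu.-integrable D (EFin \o g).
Proof.
move=> mD mg hg; apply: measurable_bounded_integrable => //.
  by apply: (le_lt_trans (probability_le1 mu mD)); exact: ltey.
exists C; split; first exact: num_real.
move=> M CM y Dy; apply: (le_trans (hg y Dy)); exact: ltW.
Qed.

Arguments bint {R d T} mu {D g} C.

Theorem lemma2 (R : realType) (M : pseudoPMetricType R)
  (hM : hausdorff_space M) (cM : compact [set: M])
  (mu : probability (borel M) R)
  (k : (borel M * borel M)%type -> R) (mk : measurable_fun setT k)
  (k01 : forall p, 0 <= k p <= 1)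
  (Ms : set (borel M)) (mMs : measurable Ms)
  (rho : R) (hrho : 0 < rho)
  (f : borel M -> R) (mf : measurable_fun (~` Ms) f)
  (bf : exists C : R, forall y, (~` Ms) y -> `|f y| <= C) :
  sup_norm Ms (A_mu mu k Ms rho f) <= (1 + rho)^-1 * sup_norm Ms f.
Proof.
have mC : measurable (~` Ms) by exact: measurableC.
case: (pselect ((~` Ms) !=set0)) => [ne|e]; last first.
  have E : forall g : borel M -> R, [set `|g y| | y in ~` Ms] = set0.
    move=> g; apply/seteqP; split => // z [y hy _]; exfalso; apply: e; by exists y.
  by rewrite /sup_norm !E sup0 mulr0.
case: bf => C hC.
set S := sup_norm Ms f.
have hS : forall y, (~` Ms) y -> `|f y| <= S.
  move=> y hy; apply: ub_le_sup; last by exists y.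
  by exists C => _ [z hz <-]; exact: hC.
have S0 : 0 <= S by case: ne => y hy; exact: le_trans (hS y hy).
apply: ge_sup; first by case: ne => y hy; exists `|A_mu mu k Ms rho f y|, y.
move=> _ [x hx <-].
have mkx : measurable_fun setT (fun y => k (x, y)) := measurable_fun_pair2 x mk.
have k0 : forall y, 0 <= k (x, y) by move=> y; case/andP: (k01 (x, y)).
have k1 : forall y, k (x, y) <= 1 by move=> y; case/andP: (k01 (x, y)).
have nk : forall y, `|k (x, y)| <= 1 by move=> y; rewrite ger0_norm.
have mkxC : measurable_fun (~` Ms) (fun y => k (x, y)) := measurable_funS measurableT (@subsetT _ _) mkx.
have mg : measurable_fun (~` Ms) (fun y => k (x, y) * f y) by exact: measurable_funM.
have ig : mu.-integrable (~` Ms) (EFin \o (fun y => k (x, y) * f y)).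
  apply: (bint mu C) => // y hy; rewrite normrM.
  by rewrite -[C]mul1r ler_pM // hC.
set a := Rintegral mu (~` Ms) (fun y => k (x, y)).
set b := Rintegral mu setT (fun y => k (x, y)).
have hn : `|Rintegral mu (~` Ms) (fun y => k (x, y) * f y)| <= S * a.
  apply: (le_trans (le_normr_Rintegral _ _)) => //.
  rewrite /a -RintegralZl //; last exact: (bint mu 1).
  apply: le_Rintegral => //.
    apply: (bint mu C) => //; first by apply: measurableT_comp.
    by move=> y hy; rewrite normr_id normrM -[C]mul1r ler_pM // hC.
    apply: (bint mu S) => //; first by apply: measurable_funM => //; exact: measurable_cst.
    by move=> y hy; rewrite normrM (ger0_norm S0) (ger0_norm (k0 y)) -{2}[S]mulr1 ler_pM.
  move=> y hy; rewrite normrM (ger0_norm (k0 y)) mulrC ler_pM //; exact: hS.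
have ab : a <= b.
  rewrite /a /b Rintegral_mkcond; apply: le_Rintegral => //.
  - apply: (bint mu 1) => //.
      by apply/(measurable_restrictT _ mC).
    by move=> y _; rewrite patchE; case: ifP => _ //; rewrite normr0.
  - exact: (bint mu 1).
  - by move=> y _; rewrite patchE; case: ifP => _ //.
have b1 : b <= 1.
  rewrite /b; apply: (@le_trans _ _ (Rintegral mu setT (fun _ => 1))).
    apply: le_Rintegral => //; try (by move=> y _);
      by apply: (bint mu 1) => // y _; rewrite ?normr1.
  rewrite (Rintegral_cst mu measurableT) mul1r.
  have h : mu [set: borel M] = 1%E := probability_setT mu.
  change (fine (mu [set: borel M]) <= 1); by rewrite h.
have a0 : 0 <= a by apply: Rintegral_ge0 => y _.
have b0 : 0 <= b by lra.
rewrite /A_mu normrM normfV (ger0_norm (x := rho + b)); last lra.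
rewrite ler_pdivrMr; last lra.
set n := `|_| in hn *.
have n0 : 0 <= n by exact: normr_ge0.
have h1 : n <= S * b by apply: (le_trans hn); exact: ler_pM.
rewrite -mulrA mulrC ler_pdivlMr; last lra.
have h2 : 0 <= S * (1 - b) * rho by apply: mulr_ge0; [apply: mulr_ge0 =>//; lra | lra].
have h3 : n * rho <= S * b * rho by apply: ler_pM => //; lra.
have e1 : S * (1 - b) * rho = S * rho - S * b * rho by ring.
have e2 : n * (1 + rho) = n + n * rho by ring.
have e3 : S * (rho + b) = S * rho + S * b by ring.
rewrite e2 e3; lra.
Qed.
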